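(* Let $\alpha\in\mathbb R^n$ be a unit vector and $a_1,\dots,a_r\in\mathbb R$ with $a_1^2+\dots+a_r^2\neq0$, and let $\Gamma=(a_1\alpha\ \cdots\ a_r\alpha)$, so that $\operatorname{tr}(X^T\Gamma)=\langle a_1e_1+\dots+a_re_r,\alpha\rangle$ for $X=(e_1\cdots e_r)$. Take $\kappa=0$. Then the equations $$\dot X=P-XP^TX,\qquad \dot P=PX^TP-\Gamma+X\Lambda,\qquad \Lambda=\tfrac12\left(-2P^TP+X^T\Gamma+\Gamma^TX\right)$$ on $T^*V(n,r)$ imply the matrix equations $$\frac{d}{dt}\tilde L(\lambda)=[\tilde L(\lambda),\tilde A(\lambda)],\qquad\lambda\in\mathbb R,$$ where, with $\Phi=PX^T-XP^T$ and $x=a_1e_1+\dots+a_re_r$, the matrices $\tilde L(\lambda),\tilde A(\lambda)\in so(n+1)$ are $$\tilde L(\lambda)=\begin{pmatrix}-\lambda\Phi & x+\lambda^2\alpha\\ -x^T-\lambda^2\alpha^T&0\end{pmatrix},\qquad \tilde A(\lambda)=\begin{pmatrix}-\Phi&\lambda\alpha\\-\lambda\alpha^T&0\end{pmatrix}.$$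
   Context: $V(n,r)=\{X\in M_{n,r}(\mathbb R):X^TX=\mathbf I_r\}$ with columns $e_1,\dots,e_r$, and $T^*V(n,r)$ is realized as the set of pairs $(X,P)$ of real $n\times r$ matrices with $X^TX=\mathbf I_r$, $X^TP+P^TX=0$. The given equations are the Hamiltonian flow of $\frac12\operatorname{tr}(P^TP)-\frac12\operatorname{tr}((XP^T)^2)+\operatorname{tr}(X^T\Gamma)$ (the pendulum with normal metric, $\kappa=0$). *)

(* Defs.v *)
From HB Require Import structures.
From mathcomp Require Import all_boot all_order all_algebra.
From mathcomp Require Import all_classical all_reals all_analysis.
Set Implicit Arguments. Unset Strict Implicit. Unset Printing Implicit Defensive.
Import Order.TTheory GRing.Theory Num.Theory.
Local Open Scope ring_scope.

Definition Phi (R : ringType) (n r : nat) (X P : 'M[R]_(n, r)) : 'M[R]_n :=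
  P *m X^T - X *m P^T.

(* Gamma = (a_1 alpha ... a_r alpha) = alpha a, with a the row vector (a_1..a_r) *)
Definition Gam (R : ringType) (n r : nat) (alpha : 'cV[R]_n) (a : 'rV[R]_r)
  : 'M[R]_(n, r) := alpha *m a.

(* x = a_1 e_1 + ... + a_r e_r = X a^T, with e_i the columns of X *)
Definition xvec (R : ringType) (n r : nat) (X : 'M[R]_(n, r)) (a : 'rV[R]_r)
  : 'cV[R]_n := X *m a^T.

Definition Lam (R : fieldType) (n r : nat) (X P G : 'M[R]_(n, r)) : 'M[R]_r :=
  2^-1 *: (- (2%:R *: (P^T *m P)) + X^T *m G + G^T *m X).

Definition Lt (R : ringType) (n r : nat) (alpha : 'cV[R]_n) (a : 'rV[R]_r)
  (lam : R) (X P : 'M[R]_(n, r)) : 'M[R]_(n + 1) :=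
  block_mx (- (lam *: Phi X P)) (xvec X a + lam ^+ 2 *: alpha)
           (- (xvec X a)^T - lam ^+ 2 *: alpha^T) (0 : 'M[R]_1).

Definition At (R : ringType) (n r : nat) (alpha : 'cV[R]_n)
  (lam : R) (X P : 'M[R]_(n, r)) : 'M[R]_(n + 1) :=
  block_mx (- Phi X P) (lam *: alpha) (- (lam *: alpha^T)) (0 : 'M[R]_1).

(* Main.v *)
Require Import Defs.
From HB Require Import structures.
From mathcomp Require Import all_boot all_order all_algebra.
From mathcomp Require Import all_classical all_reals all_analysis.
From mathcomp Require Import ring.
Import Order.TTheory GRing.Theory Num.Theory numFieldNormedType.Exports.
Local Open Scope ring_scope.
Local Open Scope classical_set_scope.

Set Implicit Arguments.
Section Helpers.
Variable R : realType.

Lemma isd_entry m n (M : R -> 'M[R]_(m,n)) (t : R) (dM : 'M[R]_(m,n)) i j :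
  is_derive t 1 M dM -> is_derive t 1 (fun s => M s i j) (dM i j).
Proof.
move=> [dv dval].
have dij : derivable (fun s => M s i j) t 1 by move/derivable_mxP: dv; apply.
apply: DeriveDef => //.
by rewrite -dval derive_mx // mxE.
Qed.

Lemma isd_mx m n (M : R -> 'M[R]_(m,n)) (t : R) (dM : 'M[R]_(m,n)) :
  (forall i j, is_derive t 1 (fun s => M s i j) (dM i j)) -> is_derive t 1 M dM.
Proof.
move=> H.
have dv : derivable M t 1 by apply/derivable_mxP => i j; exact: (@ex_derive _ _ _ _ _ _ _ (H i j)).
apply: DeriveDef => //.
rewrite derive_mx //; apply/matrixP => i j; rewrite mxE.
exact: (@derive_val _ _ _ _ _ _ _ (H i j)).
Qed.

Lemma isd_add m n (A B : R -> 'M[R]_(m,n)) (t : R) dA dB :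
  is_derive t 1 A dA -> is_derive t 1 B dB ->
  is_derive t 1 (fun s => A s + B s) (dA + dB).
Proof. move=> HA HB; exact: (@is_deriveD _ _ _ A B t 1 dA dB HA HB). Qed.

Lemma isd_opp m n (A : R -> 'M[R]_(m,n)) (t : R) dA :
  is_derive t 1 A dA -> is_derive t 1 (fun s => - A s) (- dA).
Proof. move=> HA; exact: (@is_deriveN _ _ _ A t 1 dA HA). Qed.

Lemma isd_sub m n (A B : R -> 'M[R]_(m,n)) (t : R) dA dB :
  is_derive t 1 A dA -> is_derive t 1 B dB ->
  is_derive t 1 (fun s => A s - B s) (dA - dB).
Proof. by move=> HA HB; apply: isd_add => //; apply: isd_opp. Qed.

Lemma isd_scale m n (k : R) (A : R -> 'M[R]_(m,n)) (t : R) dA :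
  is_derive t 1 A dA -> is_derive t 1 (fun s => k *: A s) (k *: dA).
Proof. move=> HA; exact: (@is_deriveZ _ _ _ A k t 1 dA HA). Qed.

Lemma isd_cst m n (C : 'M[R]_(m,n)) (t : R) :
  is_derive t 1 (fun _ : R => C) 0.
Proof. exact: (@is_derive_cst _ _ _ C t 1). Qed.

Lemma isd_tr m n (A : R -> 'M[R]_(m,n)) (t : R) dA :
  is_derive t 1 A dA -> is_derive t 1 (fun s => (A s)^T) dA^T.
Proof.
move=> HA; apply: isd_mx => i j.
under [fun s => _]funext => s do rewrite mxE.
rewrite mxE; exact: isd_entry.
Qed.

Lemma isd_mul m n p (A : R -> 'M[R]_(m,n)) (B : R -> 'M[R]_(n,p)) (t : R) dA dB :
  is_derive t 1 A dA -> is_derive t 1 B dB ->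
  is_derive t 1 (fun s => A s *m B s) (dA *m B t + A t *m dB).
Proof.
move=> HA HB; apply: isd_mx => i j.
have -> : (fun s => (A s *m B s) i j) =
   \sum_(k < n) (fun k s => A s i k * B s k j) k.
  apply/funext => s; rewrite mxE.
  by rewrite (@fct_sumE _ _ _ _ _ (fun k s => A s i k * B s k j)).
have -> : (dA *m B t + A t *m dB) i j =
   \sum_(k < n) (A t i k *: dB k j + B t k j *: dA i k).
  rewrite !mxE -big_split /=; apply: eq_bigr => k _.
  by rewrite addrC [dA i k * _]mulrC.
apply: is_derive_sum => k.
have H1 := is_deriveM (@isd_entry _ _ _ _ _ i k HA) (@isd_entry _ _ _ _ _ k j HB).
exact: H1.
Qed.

Lemma isd_row m n1 n2 (A : R -> 'M[R]_(m,n1)) (B : R -> 'M[R]_(m,n2)) (t : R) dA dB :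
  is_derive t 1 A dA -> is_derive t 1 B dB ->
  is_derive t 1 (fun s => row_mx (A s) (B s)) (row_mx dA dB).
Proof.
move=> HA HB; apply: isd_mx => i j.
under [fun s => _]funext => s do rewrite mxE.
rewrite mxE; case: (fintype.split j) => k; exact: isd_entry.
Qed.

Lemma isd_col m1 m2 n (A : R -> 'M[R]_(m1,n)) (B : R -> 'M[R]_(m2,n)) (t : R) dA dB :
  is_derive t 1 A dA -> is_derive t 1 B dB ->
  is_derive t 1 (fun s => col_mx (A s) (B s)) (col_mx dA dB).
Proof.
move=> HA HB; apply: isd_mx => i j.
under [fun s => _]funext => s do rewrite mxE.
rewrite mxE; case: (fintype.split i) => k; exact: isd_entry.
Qed.

Lemma isd_block m1 m2 n1 n2 (A : R -> 'M[R]_(m1,n1)) (B : R -> 'M[R]_(m1,n2))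
  (C : R -> 'M[R]_(m2,n1)) (D : R -> 'M[R]_(m2,n2)) (t : R) dA dB dC dD :
  is_derive t 1 A dA -> is_derive t 1 B dB ->
  is_derive t 1 C dC -> is_derive t 1 D dD ->
  is_derive t 1 (fun s => block_mx (A s) (B s) (C s) (D s)) (block_mx dA dB dC dD).
Proof.
by move=> *; rewrite /block_mx; apply: isd_col; apply: isd_row.
Qed.

End Helpers.
Unset Implicit Arguments.

Section Alg.
Variable R : fieldType.

Lemma entry_eq m n (A B : 'M[R]_(m,n)) : (forall i j, A i j = B i j) -> A = B.
Proof. by move=> H; apply/matrixP. Qed.

Lemma trD m n (A B : 'M[R]_(m,n)) : (A + B)^T = A^T + B^T.
Proof. by apply/matrixP => i j; rewrite !mxE. Qed.
Lemma trN m n (A : 'M[R]_(m,n)) : (- A)^T = - A^T.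
Proof. by apply/matrixP => i j; rewrite !mxE. Qed.
Lemma trZ m n k (A : 'M[R]_(m,n)) : (k *: A)^T = k *: A^T.
Proof. by apply/matrixP => i j; rewrite !mxE. Qed.

Lemma trmx11 (M : 'M[R]_1) : M^T = M.
Proof. by apply/matrixP => i j; rewrite !ord1 mxE. Qed.

Variables (n r : nat) (alpha : 'cV[R]_n) (a : 'rV[R]_r) (X P : 'M[R]_(n,r)).

Lemma PhiT : (Phi X P)^T = - Phi X P.
Proof. by rewrite /Phi trD trN !trmx_mul !trmxK opprB. Qed.

Lemma LamT : (Lam X P (Gam alpha a))^T = Lam X P (Gam alpha a).
Proof.
rewrite /Lam /Gam !trZ !trD !trN !trZ !trmx_mul !trmxK.
move: (P^T *m P) (a^T *m alpha^T *m X) (X^T *m (alpha *m a)) => A1 A2 A3.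
by apply/entry_eq => i j; rewrite !mxE; ring.
Qed.

Hypothesis XX : X^T *m X = 1%:M.

Lemma XdA : (P - X *m P^T *m X) *m a^T = Phi X P *m (X *m a^T).
Proof.
by rewrite /Phi !mulmxBl !mulmxA -(mulmxA P) XX mulmx1.
Qed.

Lemma PhiD :
  (P *m X^T *m P - Gam alpha a + X *m Lam X P (Gam alpha a)) *m X^T
  + P *m (P - X *m P^T *m X)^T
  - ((P - X *m P^T *m X) *m P^T
     + X *m (P *m X^T *m P - Gam alpha a + X *m Lam X P (Gam alpha a))^T)
  = (X *m a^T) *m alpha^T - alpha *m (X *m a^T)^T.
Proof.
rewrite !trD !trN.
rewrite !trmx_mul !trmxK LamT /Gam ?trmx_mul.
rewrite ?mulmxDl ?mulmxBl ?mulmxDr ?mulmxBr ?mulmxN ?mulNmx !mulmxA.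

move: (P *m X^T *m P *m X^T) (X *m P^T *m X *m P^T) (P *m P^T)
   (X *m Lam X P (alpha *m a) *m X^T) (alpha *m a *m X^T) (X *m a^T *m alpha^T).
move=> A1 A2 A3 A4 A5 A6.
by apply/entry_eq => i j; rewrite !mxE; ring.
Qed.

Lemma key lam :
  block_mx
   (- (lam *: ((P *m X^T *m P - Gam alpha a + X *m Lam X P (Gam alpha a)) *m X^T
       + P *m (P - X *m P^T *m X)^T
       - ((P - X *m P^T *m X) *m P^T
          + X *m (P *m X^T *m P - Gam alpha a + X *m Lam X P (Gam alpha a))^T))))
   ((P - X *m P^T *m X) *m a^T + X *m 0 + 0)
   (- ((P - X *m P^T *m X) *m a^T + X *m 0)^T - 0) 0
  = Lt alpha a lam X P *m At alpha lam X P - At alpha lam X P *m Lt alpha a lam X P.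
Proof.
rewrite PhiD XdA /Lt /At /xvec !mulmx_block opp_block_mx add_block_mx.
have E : (X *m a^T)^T *m alpha = alpha^T *m (X *m a^T).
  by rewrite -[LHS]trmx11 trmx_mul trmxK.

rewrite !mulmx0 !mul0mx !addr0 [(Phi X P *m _)^T]trmx_mul PhiT.
move: (Phi X P) => F.
congr block_mx.
- rewrite ?mulmxN ?mulNmx ?mulmxDl ?mulmxDr ?mulmxN ?mulNmx -?scalemxAl -?scalemxAr.
  apply/entry_eq => i j; rewrite !mxE. ring.
- rewrite ?mulmx0 ?mul0mx ?addr0 ?mulmxN ?mulNmx ?mulmxDl ?mulmxDr ?mulmxN ?mulNmx -?scalemxAl -?scalemxAr.
  by apply/entry_eq => i j; rewrite !mxE; ring.
- rewrite ?mulmx0 ?mul0mx ?addr0 ?mulmxN ?mulNmx ?mulmxDl ?mulmxDr ?mulmxN ?mulNmx -?scalemxAl -?scalemxAr.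
  by apply/entry_eq => i j; rewrite !mxE; ring.
- rewrite ?mulmx0 ?mul0mx ?addr0 ?mulmxN ?mulNmx ?mulmxDl ?mulmxDr ?mulmxN ?mulNmx -?scalemxAl -?scalemxAr E.
  by apply/entry_eq => i j; rewrite !mxE; ring.
Qed.

End Alg.

Theorem theorem5 (R : realType) (n r : nat) (alpha : 'cV[R]_n) (a : 'rV[R]_r)
  (T : set R) (X P : R -> 'M[R]_(n, r)) :
  alpha^T *m alpha = 1%:M ->
  \sum_(i < r) a 0 i ^+ 2 != 0 ->
  open T ->
  (forall t, T t -> (X t)^T *m X t = 1%:M /\ (X t)^T *m P t + (P t)^T *m X t = 0) ->
  (forall t, T t -> derivable X t 1 /\ derivable P t 1) ->
  (forall t, T t -> X^`() t = P t - X t *m (P t)^T *m X t) ->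
  (forall t, T t -> P^`() t = P t *m (X t)^T *m P t - Gam alpha a
                              + X t *m Lam (X t) (P t) (Gam alpha a)) ->
  forall (lam : R) (t : R), T t ->
    derivable (fun s => Lt alpha a lam (X s) (P s)) t 1 /\
    (fun s => Lt alpha a lam (X s) (P s))^`() t =
      Lt alpha a lam (X t) (P t) *m At alpha lam (X t) (P t)
      - At alpha lam (X t) (P t) *m Lt alpha a lam (X t) (P t).
Proof.
move=> _ _ _ Horth Hder HXd HPd lam t Tt.
have [dX dP] := Hder t Tt.
have [XX _] := Horth t Tt.
have HX := derivableP dX.
have HP := derivableP dP.
rewrite -derive1E (HXd t Tt) in HX.
rewrite -derive1E (HPd t Tt) in HP.
have HL : is_derive t 1 (fun s => Lt alpha a lam (X s) (P s)) (block_mx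
   (- (lam *: ((P t *m (X t)^T *m P t - Gam alpha a + X t *m Lam (X t) (P t) (Gam alpha a)) *m (X t)^T
       + P t *m (P t - X t *m (P t)^T *m X t)^T
       - ((P t - X t *m (P t)^T *m X t) *m (P t)^T
          + X t *m (P t *m (X t)^T *m P t - Gam alpha a + X t *m Lam (X t) (P t) (Gam alpha a))^T))))
   ((P t - X t *m (P t)^T *m X t) *m a^T + X t *m 0 + 0)
   (- ((P t - X t *m (P t)^T *m X t) *m a^T + X t *m 0)^T - 0) 0).
  rewrite /Lt /Phi /xvec.
  apply: isd_block.
  - exact: (isd_opp (isd_scale lam (isd_sub (isd_mul HP (isd_tr HX)) (isd_mul HX (isd_tr HP))))).
  - apply: isd_add; try exact: isd_cst; exact (isd_mul HX (@isd_cst R _ _ a^T t)).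
  - apply: isd_sub; try exact: isd_cst; exact (isd_opp (isd_tr (isd_mul HX (@isd_cst R _ _ a^T t)))).
split; first exact: ex_derive.
rewrite derive1E derive_val.
exact (@key _ _ _ alpha a (X t) (P t) XX lam).
Qed.
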